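(* Let $\alpha\in[0,1)$, let $s\geq 1$, $t\geq 1$ and $p\geq 1$ be integers, and let $n_{1}\geq n_{2}\geq\cdots\geq n_{t}\geq p$ be positive integers with $n=\sum_{i=1}^{t}n_{i}+s$ and $n_{1}\leq n-s-p(t-1)$. Then $$\rho_{\alpha}\big(K_{s}\vee(K_{n_{1}}\cup K_{n_{2}}\cup\cdots\cup K_{n_{t}})\big)\leq\rho_{\alpha}\big(K_{s}\vee(K_{n-s-p(t-1)}\cup(t-1)K_{p})\big),$$ with equality if and only if $(n_1,n_2,\ldots,n_t)=(n-s-p(t-1),p,\ldots,p)$.
   Context: For a graph $G$, $A(G)$ is its adjacency matrix and $D(G)$ the diagonal matrix of vertex degrees. For $\alpha\in[0,1]$, $A_{\alpha}(G)=\alpha D(G)+(1-\alpha)A(G)$, and $\rho_{\alpha}(G)$ denotes the largest eigenvalue of $A_{\alpha}(G)$. $K_m$ is the complete graph on $m$ vertices, $(t-1)K_p$ is the disjoint union of $t-1$ copies of $K_p$, $\cup$ denotes disjoint union, and $G_1\vee G_2$ (join) is obtained from $G_1\cup G_2$ by adding all edges between $V(G_1)$ and $V(G_2)$. *)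

(* Defs.v *)
From mathcomp Require Import all_boot all_order all_algebra.
From mathcomp Require Import polyrcf.
From mathcomp Require Import reals.
Set Implicit Arguments. Unset Strict Implicit. Unset Printing Implicit Defensive.
Import Order.TTheory GRing.Theory Num.Theory.
Local Open Scope ring_scope.

Section Graphs.
Variable R : realType.

(* A simple graph on vertex set 'I_n is given by a relation [e];
   only its symmetric irreflexive part is used (loops ignored). *)
Definition adj_mx (n : nat) (e : rel 'I_n) : 'M[R]_n :=
  \matrix_(i, j) ((i != j) && e i j)%:R.

Definition deg_mx (n : nat) (e : rel 'I_n) : 'M[R]_n :=
  diag_mx (\row_i \sum_j adj_mx e i j).

Definition A_alpha (n : nat) (alpha : R) (e : rel 'I_n) : 'M[R]_n :=
  alpha *: deg_mx e + (1 - alpha) *: adj_mx e.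

(* Largest eigenvalue of a square real matrix: the largest real root of its
   characteristic polynomial (rootsR lists all real roots in increasing order). *)
Definition lambda_max (n : nat) (M : 'M[R]_n) : R :=
  last 0 (rootsR (char_poly M)).

Definition rho_alpha (n : nat) (alpha : R) (e : rel 'I_n) : R :=
  lambda_max (A_alpha alpha e).
End Graphs.

(* blk ns k = index of the block containing position k, when positions
   0 .. sumn ns - 1 are split into consecutive blocks of sizes ns. *)
Fixpoint blk (ns : seq nat) (k : nat) : nat :=
  match ns with
  | [::] => 0%N
  | m :: ns' => if (k < m)%N then 0%N else (blk ns' (k - m)%N).+1
  end.

(* K_s \/ (K_{n_1} u ... u K_{n_t}) with ns = [:: n_1; ...; n_t]:
   vertices 0..s-1 form K_s, the remaining vertices are split into
   consecutive cliques of sizes n_1, ..., n_t. *)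
Definition join_cliques (s : nat) (ns : seq nat) : rel 'I_(s + sumn ns) :=
  fun i j => (i != j) &&
    [|| (i < s)%N, (j < s)%N | blk ns (i - s) == blk ns (j - s)].
Arguments join_cliques : clear implicits.

(* Main.v *)
Require Import Defs.
From mathcomp Require Import all_boot all_order all_algebra.
From mathcomp Require Import polyrcf reals.
From mathcomp Require Import ring lra zify.
Import Order.TTheory GRing.Theory Num.Theory.
Local Open Scope ring_scope.
Set Implicit Arguments. Unset Strict Implicit. Unset Printing Implicit Defensive.

Section Aux.
Variable R : realType.

Lemma path_le_last (a : R) (s : seq R) y :
  path <=%R a s -> y \in a :: s -> y <= last a s.
Proof.
elim: s a y => [|b s IH] a y /=; first by rewrite inE => _ /eqP ->.
move=> /andP[ab pb]; rewrite inE => /orP[/eqP ->|ys].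
  by apply: le_trans ab _; apply: IH pb _; rewrite inE eqxx.
exact: IH.
Qed.

Lemma lmax_ge n (M : 'M[R]_n) x : root (char_poly M) x -> x <= lambda_max M.
Proof.
move=> rx.
have nz : char_poly M != 0 by apply: monic_neq0; apply: char_poly_monic.
have xin : x \in rootsR (char_poly M).
  by apply: (root_roots_on (roots_on_rootsR nz)) => //; rewrite in_itv.
rewrite /lambda_max.
have := sorted_roots (- cauchy_bound (char_poly M)) (cauchy_bound (char_poly M)) (char_poly M).
rewrite -/(rootsR _).
move: xin; case: (rootsR _) => [//|a s] xin /= srt.
apply: path_le_last => //.
by apply: sub_path srt => u v /ltW.
Qed.

Lemma lmax_spec n (M : 'M[R]_n) :
  lambda_max M = 0 \/ root (char_poly M) (lambda_max M).
Proof.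
rewrite /lambda_max.
have := @root_roots _ (char_poly M) (- cauchy_bound (char_poly M)) (cauchy_bound (char_poly M)).
rewrite -/(rootsR _).
case: (rootsR _) => [|a s] H /=; first by left.
by right; apply: H; rewrite mem_last.
Qed.

Lemma lmax_eq n (M : 'M[R]_n) r : root (char_poly M) r ->
  (forall x, root (char_poly M) x -> x <= r) -> 0 <= r -> lambda_max M = r.
Proof.
move=> rr H r0; apply/eqP; rewrite eq_le lmax_ge // andbT.
by case: (lmax_spec M) => [->|/H].
Qed.

Lemma lmax_le n (M : 'M[R]_n) r :
  (forall x, root (char_poly M) x -> x <= r) -> 0 <= r -> lambda_max M <= r.
Proof. by move=> H r0; case: (lmax_spec M) => [->|/H]. Qed.

End Aux.
Section Aux2.
Variable R : realType.

Lemma mulA_alpha n (a : R) (e : rel 'I_n) (v : 'rV[R]_n) j :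
  (v *m A_alpha a e) 0 j =
  a * (\sum_k adj_mx R e j k) * v 0 j + (1 - a) * \sum_i v 0 i * adj_mx R e i j.
Proof.
rewrite !mxE.
rewrite (eq_bigr (fun i => v 0 i * (a * ((\sum_k adj_mx R e i k) *+ (i == j))) +
   (1 - a) * (v 0 i * adj_mx R e i j))); last first.
  by move=> i _; rewrite /A_alpha /deg_mx !mxE mulrDr; congr (_ + _); exact: mulrCA.
rewrite big_split /= -mulr_sumr; congr (_ + _).
rewrite (bigD1 j) //= eqxx mulr1n [X in _ + X = _]big1 ?addr0.
  exact: mulrC.
by move=> i /negbTE ->; rewrite mulr0n !mulr0.
Qed.

Lemma sum_ord1 m : \sum_(i < m) (1 : R) = m%:R.
Proof. by rewrite big_const_ord; elim: m => //= m ->; rewrite -natr1 addrC. Qed.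

Lemma sum_constR (I : finType) (P : pred I) (x : R) :
  \sum_(i | P i) x = (\sum_(i | P i) 1) * x.
Proof. by rewrite mulr_suml; apply: eq_bigr => i _; rewrite mul1r. Qed.

Lemma sum_neq (I : finType) (w : I -> R) (P : pred I) j : P j ->
  \sum_i w i * ((i != j) && P i)%:R = \sum_(i | P i) w i - w j.
Proof.
move=> Pj; rewrite (bigD1 j) //= eqxx mulr0 add0r.
rewrite [in RHS](bigD1 j) //= [w j + _]addrC addrK.
rewrite [in RHS]big_mkcond /= [in LHS]big_mkcond /=; apply: eq_bigr => i _.
by case: (i != j); case: (P i) => /=; rewrite ?mulr1 ?mulr0.
Qed.

End Aux2.
Section Conv.
Variable R : realType.

Lemma pair_ineq (y A B P : R) : P <= A -> P <= B -> 0 <= P -> A + B - P < y ->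
  A / (y - A) + B / (y - B) <= (A + B - P) / (y - (A + B - P)) + P / (y - P) /\
  (A / (y - A) + B / (y - B) = (A + B - P) / (y - (A + B - P)) + P / (y - P) ->
    A = P \/ B = P).
Proof.
move=> hA hB hP hy.
have z0 : 0 < y - (A + B - P) by lra.
have u0 : 0 < y - A by lra.
have v0 : 0 < y - B by lra.
have w0 : 0 < y - P by lra.
have y0 : 0 < y by lra.
have E : (A + B - P) / (y - (A + B - P)) + P / (y - P) - (A / (y - A) + B / (y - B)) =
  y * ((y - A) + (y - B)) * (A - P) * (B - P) / ((y - A) * (y - B) * (y - P) * (y - (A + B - P))).
  by field; rewrite !gt_eqF.
have D0 : 0 < (y - A) * (y - B) * (y - P) * (y - (A + B - P)) by rewrite !mulr_gt0.
split.
  rewrite -subr_ge0 E; apply: divr_ge0; last exact: ltW.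
  by apply: mulr_ge0; [apply: mulr_ge0; [apply: mulr_ge0|]|]; lra.
move=> eq; have : y * ((y - A) + (y - B)) * (A - P) * (B - P) = 0.
  have := E; rewrite eq subrr => /esym h.
  move: h D0; set D := ((y - A) * (y - B) * (y - P) * (y - (A + B - P))).
  set X := (y * (y - A + (y - B)) * (A - P) * (B - P)) => h D0.
  have D0n : D != 0 by rewrite gt_eqF.
  have -> : X = (X / D) * D by field.
  by rewrite h mul0r.
move/eqP; rewrite !mulf_eq0 (gt_eqF y0) /= => /orP[/orP[|]|]; first by move=> h; lra.
  by rewrite subr_eq0 => /eqP; left.
by rewrite subr_eq0 => /eqP; right.
Qed.

Lemma count_le (p : nat) (l : seq nat) : all (leq p) l ->
  (p * size l + count (fun m => p < m) l <= sumn l)%N.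
Proof.
elim: l => [|m r IH] /=; first by rewrite muln0.
move=> /andP[pm /IH H].
rewrite mulnS; case: ltnP => /= h; lia.
Qed.

Definition FF (y : R) (m : nat) : R := m%:R / (y - m%:R).

Lemma conv_list (p : nat) (l : seq nat) (y : R) : all (leq p) l -> l != [::] ->
  (sumn l - p * (size l).-1)%:R < y ->
  \sum_(m <- l) FF y m <= FF y (sumn l - p * (size l).-1) + (size l).-1%:R * FF y p /\
  (\sum_(m <- l) FF y m = FF y (sumn l - p * (size l).-1) + (size l).-1%:R * FF y p ->
    (count (fun m => p < m) l <= 1)%N).
Proof.
elim: l => [|m r IH] // Hall _.
move: Hall; rewrite [all _ _]/= => /andP[pm allr].
case: r IH allr => [|x r'] IH allr.
  rewrite big_cons big_nil /= !addn0 muln0 subn0 mul0r !addr0 => _; split => // _.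
  by case: (p < m)%N.
set r := x :: r' in IH allr *.
have cr := count_le allr.
have sc : sumn (m :: r) = (m + sumn r)%N by [].
have sz : (size (m :: r)).-1 = size r by [].
have cc : count (fun m => p < m)%N (m :: r) = ((p < m)%N + count (fun m => p < m)%N r)%N by [].
rewrite sc sz cc.
have szr : size r = (size r').+1 by [].
rewrite szr in cr *.
set k := size r' in cr *.
move=> hy.
set rr := (sumn r - p * k)%N.
have rrE : (m + sumn r - p * k.+1 = m + rr - p)%N by rewrite /rr; lia.
have prr : (p <= rr)%N by rewrite /rr; lia.
have hy' : rr%:R < y.
  apply: le_lt_trans hy; rewrite ler_nat; lia.
have [IH1 IH2] := IH allr isT hy'.
have h1 : (p%:R : R) <= m%:R by rewrite ler_nat.
have h2 : (p%:R : R) <= rr%:R by rewrite ler_nat.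
have h3 : (0 : R) <= p%:R by rewrite ler0n.
have hpr : (p <= m + rr)%N by clear -prr pm; lia.
have h4 : (m%:R + rr%:R - p%:R : R) < y.
  by move: hy; rewrite rrE (natrB _ hpr) natrD.
have [P1 P2] := @pair_ineq y m%:R rr%:R p%:R h1 h2 h3 h4.
have cE : (m%:R + rr%:R - p%:R : R) = (m + sumn r - p * k.+1)%N%:R.
  by rewrite rrE (natrB _ hpr) natrD.
rewrite cE in P1 P2.
rewrite big_cons.
set S := \sum_(_ <- _) _ in IH1 IH2 *.
rewrite -/(FF y m) -/(FF y rr) -/(FF y p) in P1 P2.
set c1 := FF y (m + sumn r - p * k.+1)%N.
change ((m + sumn r - p * k.+1)%:R / (y - (m + sumn r - p * k.+1)%:R)) with c1 in P1.
change ((m + sumn r - p * k.+1)%:R / (y - (m + sumn r - p * k.+1)%:R)) with c1 in P2.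
rewrite szr /= -/rr in IH1 IH2.
rewrite -[k.+1]addn1 natrD mulrDl mul1r.
split; first lra.
move=> eq.
have E1 : FF y m + FF y rr = c1 + FF y p by lra.
have E2 : S = FF y rr + k%:R * FF y p by lra.
have C := IH2 E2.
case: (P2 E1) => /eqP; rewrite eqr_nat => /eqP h.
  by rewrite h ltnn add0n.
have C0 : (count (fun m0 => p < m0)%N r = 0)%N.
  move: cr h; rewrite /rr mulnS => cr h; clear -cr h; lia.
by rewrite C0 addn0; case: (p < m)%N.
Qed.
End Conv.

Lemma blk_lt (ns : seq nat) k : (k < sumn ns)%N -> (blk ns k < size ns)%N.
Proof.
elim: ns k => [|m ns IH] k //=.
case: ifP => // km H; rewrite ltnS; apply: IH.
by move: H km; rewrite /=; lia.
Qed.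

Section Graph.
Variable R : realType.
Variables (s : nat) (ns : seq nat).
Local Notation G := (join_cliques s ns).

Lemma cnt_blk (ns' : seq nat) b :
  \sum_(k < sumn ns' | blk ns' k == b) (1 : R) = (nth 0%N ns' b)%:R.
Proof.
elim: ns' b => [|m r IH] b /=; first by rewrite big_ord0 nth_nil.
rewrite big_split_ord /=.
have E2 : forall k : 'I_(sumn r), (if (m + k < m)%N then 0%N else (blk r (m + k - m)).+1) = (blk r k).+1.
  by move=> k; rewrite ltnNge leq_addr /= addKn.
rewrite (eq_bigl (fun k : 'I_(sumn r) => (blk r k).+1 == b)); last by move=> k; rewrite E2.
rewrite (eq_bigl (fun _ => 0%N == b)); last by move=> i /=; rewrite ltn_ord.
case: b => [|b].
  rewrite [X in _ + X]big_pred0 // addr0 /=.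
  rewrite (eq_bigl xpredT) // big_const_ord; elim: m {E2} => //= m ->.
  by rewrite -natr1 addrC.
rewrite big_pred0 // add0r.
by rewrite (eq_bigl (fun k : 'I_(sumn r) => blk r k == b)) ?IH.
Qed.

Lemma adjLL (i i' : 'I_s) :
  adj_mx R G (lshift _ i) (lshift _ i') = ((i != i') && true)%:R.
Proof.
rewrite /adj_mx mxE /join_cliques /= ltn_ord /= !andbT andbb.
by rewrite (inj_eq (@lshift_inj _ _)).
Qed.

Lemma adjLR (i : 'I_s) (k : 'I_(sumn ns)) :
  adj_mx R G (lshift _ i) (rshift _ k) = 1.
Proof.
rewrite /adj_mx mxE /join_cliques /= ltn_ord /= !andbT andbb.
suff -> : (lshift (sumn ns) i != rshift s k) by [].
by rewrite -val_eqE /= neq_ltn; apply/orP; left; apply: leq_trans (ltn_ord i) (leq_addr _ _).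
Qed.

Lemma adjRL (i : 'I_s) (k : 'I_(sumn ns)) :
  adj_mx R G (rshift _ k) (lshift _ i) = 1.
Proof.
rewrite /adj_mx mxE /join_cliques /= ltn_ord /= orbT !andbT andbb.
suff -> : (rshift s k != lshift (sumn ns) i) by [].
by rewrite -val_eqE /= neq_ltn; apply/orP; right; apply: leq_trans (ltn_ord i) (leq_addr _ _).
Qed.

Lemma adjRR (k k' : 'I_(sumn ns)) :
  adj_mx R G (rshift _ k) (rshift _ k') = ((k != k') && (blk ns k == blk ns k'))%:R.
Proof.
rewrite /adj_mx mxE /join_cliques /= !ltnNge !leq_addr /= !addKn andbA andbb.
by rewrite (inj_eq (@rshift_inj _ _)).
Qed.


Lemma sumL (w : 'I_(s + sumn ns) -> R) (j : 'I_s) :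
  \sum_i w i * adj_mx R G i (lshift _ j) =
  \sum_(i < s) w (lshift _ i) - w (lshift _ j) + \sum_(k < sumn ns) w (rshift _ k).
Proof.
rewrite big_split_ord /=; congr (_ + _).
  under eq_bigr do rewrite adjLL.
  by rewrite (@sum_neq _ _ (fun i => w (lshift _ i)) predT).
by apply: eq_bigr => k _; rewrite adjRL mulr1.
Qed.

Lemma sumR (w : 'I_(s + sumn ns) -> R) (k' : 'I_(sumn ns)) :
  \sum_i w i * adj_mx R G i (rshift _ k') =
  \sum_(i < s) w (lshift _ i) +
  (\sum_(k < sumn ns | blk ns k == blk ns k') w (rshift _ k) - w (rshift _ k')).
Proof.
rewrite big_split_ord /=; congr (_ + _).
  by apply: eq_bigr => k _; rewrite adjLR mulr1.
under eq_bigr do rewrite adjRR.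
by rewrite (@sum_neq _ _ (fun k => w (rshift _ k)) (fun k => blk ns k == blk ns k')).
Qed.

Lemma adj_sym i j : adj_mx R G i j = adj_mx R G j i.
Proof.
rewrite /adj_mx !mxE /join_cliques eq_sym; congr ((_ && (_ && _))%:R).
by rewrite orbA [((i < s)%N || _)]orbC -orbA [blk _ (j - s) == _]eq_sym.
Qed.

Lemma degL (j : 'I_s) :
  \sum_k adj_mx R G (lshift _ j) k = s%:R - 1 + (sumn ns)%:R.
Proof.
under eq_bigr do rewrite adj_sym -[adj_mx _ _ _ _]mul1r.
by rewrite (@sumL (fun _ => 1)) !sum_ord1.
Qed.

Lemma degR (k' : 'I_(sumn ns)) :
  \sum_k adj_mx R G (rshift _ k') k = s%:R + (nth 0%N ns (blk ns k'))%:R - 1.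
Proof.
under eq_bigr do rewrite adj_sym -[adj_mx _ _ _ _]mul1r.
by rewrite (@sumR (fun _ => 1)) sum_ord1 cnt_blk addrA.
Qed.

Lemma part_blk (F : 'I_(sumn ns) -> R) :
  \sum_(k < sumn ns) F k =
  \sum_(b < size ns) \sum_(k < sumn ns | blk ns k == b) F k.
Proof.
rewrite (partition_big (fun k : 'I_(sumn ns) => Ordinal (blk_lt (ltn_ord k))) xpredT) //=.
Qed.


Variable a : R.
Definition th (m : nat) : R := m%:R - 1 + a * s%:R.
Definition th0 : R := a * (sumn ns)%:R + s%:R - 1.
Definition gfun (l : R) : R :=
  l - th0 - (1 - a) ^+ 2 * s%:R *
  \sum_(b < size ns) (nth 0%N ns b)%:R / (l - th (nth 0%N ns b)).

Lemma eig_g (v : 'rV[R]_(s + sumn ns)) l :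
  a < 1 -> all (fun m => 0 < m)%N ns -> v *m A_alpha a G = l *: v -> v != 0 ->
  (forall b : 'I_(size ns), th (nth 0%N ns b) < l) ->
  gfun l = 0 \/ l = a * (s + sumn ns)%:R - 1.
Proof.
move=> a1 npos Hv vnz Hth.
set sig := \sum_(i < s) v 0 (lshift _ i).
set tau := fun b => \sum_(k < sumn ns | blk ns k == b) v 0 (rshift s k).
set T := \sum_(k < sumn ns) v 0 (rshift s k).
have HL : forall j : 'I_s, (l - a * (s%:R - 1 + (sumn ns)%:R) + (1 - a)) * v 0 (lshift _ j)
    = (1 - a) * (sig + T).
  move=> j; have := congr1 (fun M : 'rV[R]_(s + sumn ns) => M 0 (lshift _ j)) Hv.
  rewrite mulA_alpha mxE degL (sumL (fun i => v 0 i)) -/sig -/T => E; lra.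
have HR : forall k : 'I_(sumn ns),
    (l - a * (s%:R + (nth 0%N ns (blk ns k))%:R - 1) + (1 - a)) * v 0 (rshift _ k)
    = (1 - a) * (sig + tau (blk ns k)).
  move=> k; have := congr1 (fun M : 'rV[R]_(s + sumn ns) => M 0 (rshift _ k)) Hv.
  rewrite mulA_alpha mxE degR (sumR (fun i => v 0 i)) -/sig => E; rewrite /tau; lra.
have SL : (l - a * (s%:R - 1 + (sumn ns)%:R) + (1 - a)) * sig = (1 - a) * s%:R * (sig + T).
  rewrite /sig mulr_sumr; under eq_bigr do rewrite HL.
  by rewrite sum_constR sum_ord1 mulrA [_ * (1 - a)]mulrC.
have SR : forall b, (l - a * (s%:R + (nth 0%N ns b)%:R - 1) + (1 - a)) * tau b =
    (1 - a) * (nth 0%N ns b)%:R * (sig + tau b).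
  move=> b; rewrite {1}/tau mulr_sumr.
  rewrite (eq_bigr (fun _ => (1 - a) * (sig + tau b))); last first.
    by move=> k /eqP Hk; rewrite -Hk HR.
  by rewrite sum_constR cnt_blk mulrA [_ * (1 - a)]mulrC.
have TE : T = \sum_(b < size ns) tau b by rewrite /T part_blk.
have SL' : (l - th0) * sig = (1 - a) * s%:R * T by rewrite /th0; lra.
have SR' : forall b, (l - th (nth 0%N ns b)) * tau b = (1 - a) * (nth 0%N ns b)%:R * sig.
  by move=> b; have := SR b; rewrite /th; lra.
have thne : forall b : 'I_(size ns), l - th (nth 0%N ns b) != 0.
  by move=> b; rewrite subr_eq0 gt_eqF // Hth.
have [sig0|signz] := eqVneq sig 0.
  right.
  have tau0 : forall b : 'I_(size ns), tau b = 0.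
    move=> b; have := SR' b; rewrite sig0 mulr0 => /eqP; rewrite mulf_eq0.
    by rewrite (negbTE (thne b)) => /eqP.
  have T0 : T = 0 by rewrite TE big1.
  have vR : forall k, v 0 (rshift _ k) = 0.
    move=> k; have := HR k; rewrite sig0 add0r.
    have bl := blk_lt (ltn_ord k).
    rewrite (tau0 (Ordinal bl)) mulr0 => /eqP; rewrite mulf_eq0 => /orP[|/eqP//].
    have := Hth (Ordinal bl); rewrite /th /=.
    have : (0 < nth 0%N ns (blk ns k))%N by apply: (allP npos); rewrite mem_nth.
    rewrite -(ltr0n R) => np lt0 /eqP e0; exfalso.
    have : 0 < (1 - a) * (nth 0%N ns (blk ns k))%:R by apply: mulr_gt0 => //; rewrite subr_gt0.
    nra.
  apply/eqP; rewrite natrD; apply: contraLR vnz => ne.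
  apply/negPn/eqP/rowP => j; rewrite !mxE; case: (splitP j) => [i /= ji|k /= jk].
    have -> : j = lshift _ i by apply: val_inj.
    have := HL i; rewrite sig0 T0 addr0 mulr0 => /eqP; rewrite mulf_eq0 => /orP[|/eqP//].
    move=> /eqP e; exfalso; move/eqP: ne; apply; lra.
  by have -> : j = rshift _ k by apply: val_inj.
left.
have tauE : forall b : 'I_(size ns), tau b = (1 - a) * sig * ((nth 0%N ns b)%:R / (l - th (nth 0%N ns b))).
  move=> b; have := SR' b => E.
  apply: (mulfI (thne b)); rewrite E; field; exact: thne b.
have TE' : T = (1 - a) * sig * \sum_(b < size ns) (nth 0%N ns b)%:R / (l - th (nth 0%N ns b)).
  by rewrite TE mulr_sumr; apply: eq_bigr => b _; rewrite tauE.
apply: (mulIf signz); rewrite mul0r /gfun.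
move: SL'; rewrite TE' => E.
set S := \sum_(b < _) _ in E *.
lra.
Qed.

Lemma g_eig l : (0 < s)%N ->
  (forall b : 'I_(size ns), th (nth 0%N ns b) < l) -> gfun l = 0 ->
  root (char_poly (A_alpha a G)) l.
Proof.
move=> s0 Hth g0.
have thne : forall b : 'I_(size ns), l - th (nth 0%N ns b) != 0.
  by move=> b; rewrite subr_eq0 gt_eqF // Hth.
pose beta (b : nat) := (1 - a) * s%:R / (l - th (nth 0%N ns b)).
pose v : 'rV[R]_(s + sumn ns) := \row_j (if (j < s)%N then 1 else beta (blk ns (j - s))).
have vL : forall i, v 0 (lshift _ i) = 1 by move=> i; rewrite mxE /= ltn_ord.
have vR : forall k, v 0 (rshift _ k) = beta (blk ns k).
  by move=> k; rewrite mxE /= ltnNge leq_addr /= addKn.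
have tauE : forall b, \sum_(k < sumn ns | blk ns k == b) v 0 (rshift s k) = (nth 0%N ns b)%:R * beta b.
  move=> b; rewrite (eq_bigr (fun _ => beta b)); last by move=> k /eqP <-; rewrite vR.
  by rewrite sum_constR cnt_blk.
set S := \sum_(b < size ns) (nth 0%N ns b)%:R / (l - th (nth 0%N ns b)).
have TE : \sum_(k < sumn ns) v 0 (rshift s k) = (1 - a) * s%:R * S.
  rewrite part_blk /S mulr_sumr; apply: eq_bigr => b _; rewrite tauE /beta.
  by rewrite mulrCA !mulrA.
rewrite -eigenvalue_root_char; apply/eigenvalueP; exists v; last first.
  apply/eqP => /rowP /(_ (lshift (sumn ns) (Ordinal s0))); rewrite vL mxE => /eqP.
  by rewrite oner_eq0.
apply/rowP => j; rewrite mulA_alpha [in RHS]mxE; case: (splitP j) => [i /= ji|k /= jk].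
  have -> : j = lshift _ i by apply: val_inj.
  rewrite degL (sumL (fun i => v 0 i)) TE !vL.
  under eq_bigr do rewrite vL.
  rewrite sum_ord1.
  move: g0; rewrite /gfun -/S /th0 => E; lra.
have -> : j = rshift _ k by apply: val_inj.
rewrite degR (sumR (fun i => v 0 i)) tauE !vR.
under eq_bigr do rewrite vL.
rewrite sum_ord1.
have bl := blk_lt (ltn_ord k).
have Hb : beta (blk ns k) * (l - th (nth 0%N ns (blk ns k))) = (1 - a) * s%:R.
  rewrite /beta; field; exact: (thne (Ordinal bl)).
move: Hb; rewrite /th; set bb := beta _ => Hb; lra.
Qed.

Lemma gfun_list l : gfun l =
  l - th0 - (1 - a) ^+ 2 * s%:R * \sum_(m <- ns) m%:R / (l - th m).
Proof. by rewrite /gfun (big_nth 0%N) big_mkord. Qed.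

Lemma gfun_mono l1 l2 : (forall b : 'I_(size ns), th (nth 0%N ns b) < l1) ->
  l1 < l2 -> gfun l1 < gfun l2.
Proof.
move=> Hth l12; rewrite /gfun.
have K0 : 0 <= (1 - a) ^+ 2 * s%:R by rewrite mulr_ge0 ?sqr_ge0.
have : \sum_(b < size ns) (nth 0%N ns b)%:R / (l2 - th (nth 0%N ns b)) <=
       \sum_(b < size ns) (nth 0%N ns b)%:R / (l1 - th (nth 0%N ns b)).
  apply: ler_sum => b _; apply: ler_wpM2l => //.
  have h1 : 0 < l1 - th (nth 0%N ns b) by rewrite subr_gt0.
  rewrite lef_pV2 ?posrE //; first by lra.
  by apply: lt_trans h1 _; lra.
set S1 := \sum_(b < _) _; set S2 := \sum_(b < _) _ => H.
have := ler_wpM2l K0 H; lra.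
Qed.

Lemma gfun_th0 l : (forall b : 'I_(size ns), th (nth 0%N ns b) < l) ->
  gfun l = 0 -> th0 <= l.
Proof.
move=> Hth; rewrite /gfun => g0.
have : 0 <= (1 - a) ^+ 2 * s%:R * \sum_(b < size ns) (nth 0%N ns b)%:R / (l - th (nth 0%N ns b)).
  apply: mulr_ge0; first by rewrite mulr_ge0 ?sqr_ge0.
  apply: sumr_ge0 => b _; apply: divr_ge0 => //; apply: ltW; rewrite subr_gt0; exact: Hth.
lra.
Qed.

Lemma lmax_gen r : a < 1 -> (0 < s)%N -> all (fun m => 0 < m)%N ns ->
  (forall b : 'I_(size ns), th (nth 0%N ns b) < r) -> gfun r = 0 -> 0 <= r ->
  lambda_max (A_alpha a G) = r.
Proof.
move=> a1 s0 npos Hth g0 r0; apply: lmax_eq => //; first exact: g_eig.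
move=> x; rewrite -eigenvalue_root_char => /eigenvalueP [v Hv vnz].
rewrite leNgt; apply/negP => rx.
have Hthx : forall b : 'I_(size ns), th (nth 0%N ns b) < x.
  by move=> b; apply: lt_trans (Hth b) rx.
case: (eig_g a1 npos Hv vnz Hthx) => [gx|xe].
  by have := gfun_mono Hth rx; rewrite g0 gx ltxx.
have := gfun_th0 Hth g0; rewrite /th0.
rewrite xe natrD in rx.
have : (1 : R) <= s%:R by rewrite ler1n.
move=> hs h; have : 0 < (1 - a) * s%:R by apply: mulr_gt0; lra.
lra.
Qed.

End Graph.

Lemma iter_addr (R : realType) k (c : R) : iter k (+%R c) 0 = k%:R * c.
Proof.
by elim: k => [|k IH] /=; rewrite ?mul0r // IH -addn1 natrD mulrDl mul1r addrC.
Qed.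

Lemma rho0_ex (R : realType) (a : R) s p t' N' : 0 <= a -> a < 1 -> (0 < s)%N ->
  (0 < p)%N -> (p <= N')%N ->
  exists r, th s a N' < r /\ gfun s (N' :: nseq t' p) a r = 0.
Proof.
move=> ha0 a1 s0 p0 pN.
set A := th s a N'; set B := th s a p; set t0 := th0 s (N' :: nseq t' p) a.
set K := (1 - a) ^+ 2 * s%:R.
have K0 : 0 < K.
  by rewrite /K mulr_gt0 ?ltr0n // exprn_gt0 // subr_gt0.
have BA : B <= A by rewrite /A /B /th lerD2r lerD2r ler_nat.
have hN : (1 : R) <= N'%:R by rewrite ler1n; apply: leq_trans pN.
have hp : (1 : R) <= p%:R by rewrite ler1n.
have ht : (0 : R) <= t'%:R by rewrite ler0n.
have gE : forall l, A < l -> gfun s (N' :: nseq t' p) a l =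
    l - t0 - K * (N'%:R / (l - A)) - K * t'%:R * (p%:R / (l - B)).
  move=> l _; rewrite gfun_list big_cons big_nseq iter_addr -/t0 -/A -/B -/K.
  ring.
pose P : {poly R} := ('X - t0%:P) * ('X - A%:P) * ('X - B%:P)
   - (K * N'%:R)%:P * ('X - B%:P) - (K * t'%:R * p%:R)%:P * ('X - A%:P).
have PE : forall l, A < l -> P.[l] = (l - A) * (l - B) * gfun s (N' :: nseq t' p) a l.
  move=> l hl; have hA : l - A != 0 by rewrite subr_eq0 gt_eqF.
  have hB : l - B != 0 by rewrite subr_eq0 gt_eqF //; apply: le_lt_trans hl.
  have -> : P.[l] = (l - t0) * (l - A) * (l - B) - K * N'%:R * (l - B) -
    K * t'%:R * p%:R * (l - A) by rewrite /P !hornerE.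
  rewrite gE //; field; by rewrite hA hB.
set D := `|A - t0| + 1 + K * N'%:R.
have KN : 0 < K * N'%:R by rewrite mulr_gt0 // (lt_le_trans ltr01 hN).
have nA := ler_norm (A - t0).
have D0 : K * N'%:R < D by have := normr_ge0 (A - t0); rewrite /D; lra.
set d := K * N'%:R / D.
have d0 : 0 < d by rewrite /d divr_gt0 //; lra.
have d1 : d < 1 by rewrite /d ltr_pdivrMr ?mul1r //; lra.
set a0 := A + d.
have ga0 : gfun s (N' :: nseq t' p) a a0 < 0.
  rewrite gE; last by rewrite /a0; lra.
  have e0 : a0 - A = d by rewrite /a0; ring.
  have e1 : K * (N'%:R / (a0 - A)) = D.
    by rewrite e0 /d; field; rewrite !gt_eqF //; lra.
  have e2 : 0 <= K * t'%:R * (p%:R / (a0 - B)).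
    apply: mulr_ge0; first by rewrite mulr_ge0 // ltW.
    by rewrite divr_ge0 ?ler0n // subr_ge0 /a0; lra.
  have DE : D = `|A - t0| + 1 + K * N'%:R by [].
  rewrite e1 /a0; lra.
set T0 := `|t0| + `|A| + (K * N'%:R + K * t'%:R * p%:R) + 2.
have nt := ler_norm t0; have nA0 := normr_ge0 A; have nt0 := normr_ge0 t0. have nA1 := ler_norm A.
have Ktp : 0 <= K * t'%:R * p%:R by rewrite !mulr_ge0 // ?ltW //; lra.
have gT0 : 0 < gfun s (N' :: nseq t' p) a T0.
  have TA : 1 <= T0 - A by rewrite /T0; lra.
  have TB : 1 <= T0 - B by lra.
  rewrite gE; last by lra.
  have hq1 : N'%:R / (T0 - A) <= N'%:R.
    by rewrite ler_pdivrMr ?ler_peMr //; lra.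
  have hq2 : p%:R / (T0 - B) <= p%:R.
    by rewrite ler_pdivrMr ?ler_peMr //; lra.
  have := ler_wpM2l (ltW K0) hq1.
  have := ler_wpM2l (mulr_ge0 (ltW K0) ht) hq2.
  rewrite /T0; lra.
have aT : a0 <= T0 by rewrite /a0 /T0; lra.
have Pa0 : P.[a0] < 0.
  by rewrite PE; [rewrite pmulr_rlt0 // mulr_gt0 // /a0; lra | rewrite /a0; lra].
have PT0 : 0 < P.[T0].
  by rewrite PE; [rewrite pmulr_rgt0 // mulr_gt0 // /T0; lra | rewrite /T0; lra].
have Pab : P.[a0] <= 0 <= P.[T0] by rewrite !ltW.
have [r /andP[h1 h2] /rootP Pr] := poly_ivt aT Pab.
have hr : A < r by rewrite /a0 in h1; lra.
exists r; split => //.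
have hrB : B < r by apply: le_lt_trans hr.
move: Pr; rewrite PE //.
set g := gfun _ _ _ r => Pr.
have h1n : r - A != 0 by rewrite subr_eq0 gt_eqF.
have h2n : r - B != 0 by rewrite subr_eq0 gt_eqF.
apply/eqP; move/eqP: Pr; apply: contraLR => gn.
by rewrite !mulf_neq0.
Qed.

Lemma elem_le p (l : seq nat) m : all (leq p) l -> m \in l ->
  (m + p * (size l).-1 <= sumn l)%N.
Proof.
elim: l => [|x r IH] //= /andP[px allr]; rewrite inE => /orP[/eqP ->|mr].
  by have := count_le allr; lia.
case: r IH allr mr => [|y r'] // IH allr mr.
have := IH allr mr => h.
have e : size (y :: r') = (size r').+1 by [].
rewrite e in h *; rewrite succnK in h.
rewrite mulnS; move: h; rewrite [sumn (y :: r')]/=; lia.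
Qed.


Lemma ns_eq p t' (ns : seq nat) : size ns = t'.+1 -> sorted geq ns ->
  all (leq p) ns -> (count (fun m => p < m)%N ns <= 1)%N ->
  ns = (sumn ns - p * t')%N :: nseq t' p.
Proof.
case: ns => [|m r] //= [szr] srt /andP[pm allr] cnt.
have allm : all (geq m) r.
  by apply: order_path_min srt => x y z /= h1 h2; apply: leq_trans h2 h1.
have rp : all (pred1 p) r.
  apply/allP => x xr; have px : (p <= x)%N by apply: (allP allr).
  have xm : (x <= m)%N by apply: (allP allm).
  rewrite /= eqn_leq px andbT leqNgt; apply/negP => hpx.
  have : (0 < count (fun m => p < m)%N r)%N by rewrite -has_count; apply/hasP; exists x.
  have : (p < m)%N by apply: leq_trans hpx xm.
  by move: cnt; case: (p < m)%N => //=; lia.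
move/all_pred1P: rp => ->; rewrite szr sumn_nseq.
by rewrite addnK.
Qed.

Unset Implicit Arguments. Set Strict Implicit.

Theorem lemma2p6 (R : realType) (alpha : R) (s t p : nat) (ns : seq nat) :
  0 <= alpha -> alpha < 1 ->
  (1 <= s)%N -> (1 <= t)%N -> (1 <= p)%N ->
  size ns = t ->
  sorted geq ns ->
  all (fun m => p <= m)%N ns ->
  let n := (s + sumn ns)%N in
  let ns0 := ((n - s - p * (t - 1))%N :: nseq (t - 1) p) in
  (head 0%N ns <= n - s - p * (t - 1))%N ->
  rho_alpha alpha (join_cliques s ns) <= rho_alpha alpha (join_cliques s ns0) /\
  (rho_alpha alpha (join_cliques s ns) = rho_alpha alpha (join_cliques s ns0)
     <-> ns = ns0).
Proof.
move=> ha0 ha1 s1 t1 p1 szt srt allp.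
case: t t1 szt => // t' _ szt n ns0 _.
set N' := (sumn ns - p * t')%N.
have ns0E : ns0 = N' :: nseq t' p by rewrite /ns0 /n subn1 /= addKn.
rewrite ns0E; clear ns0E ns0.
have cnt := count_le allp; rewrite szt mulnS in cnt.
have pN : (p <= N')%N by rewrite /N'; lia.
have sum0 : sumn (N' :: nseq t' p) = sumn ns.
  by rewrite /= sumn_nseq /N'; lia.
have [r [hr gr]] := rho0_ex t' ha0 ha1 s1 p1 pN.
set A := th s alpha N' in hr.
have hN : (1 : R) <= N'%:R by rewrite ler1n; apply: leq_trans pN.
have as0 : 0 <= alpha * s%:R by rewrite mulr_ge0.
have A0 : 0 <= A by rewrite /A /th; lra.
have r0 : 0 < r by lra.
have thle : forall m, (m <= N')%N -> th s alpha m <= A.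
  by move=> m hm; rewrite /A /th lerD2r lerD2r ler_nat.
have Hth0 : forall b : 'I_(size (N' :: nseq t' p)),
    th s alpha (nth 0%N (N' :: nseq t' p) b) < r.
  move=> [[|b] hb] /=; first by apply: le_lt_trans hr; rewrite thle.
  rewrite nth_nseq; case: ifP => _; apply: le_lt_trans hr; apply: thle => //.
have npos0 : all (fun m => 0 < m)%N (N' :: nseq t' p).
  rewrite /= all_nseq; apply/andP; split; first by apply: leq_trans pN.
  by rewrite p1 orbT.
have L0 := lmax_gen ha1 s1 npos0 Hth0 gr (ltW r0).
rewrite /rho_alpha L0.
have Hc : forall l1 l2 : seq nat, l1 = l2 ->
    lambda_max (A_alpha alpha (join_cliques s l1)) =
    lambda_max (A_alpha alpha (join_cliques s l2)) by move=> ? ? ->.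
set x := lambda_max (A_alpha alpha (join_cliques s ns)).
have th0E : th0 s (N' :: nseq t' p) alpha = th0 s ns alpha by rewrite /th0 sum0.
have th0r : th0 s ns alpha <= r by rewrite -th0E; apply: gfun_th0 Hth0 gr.
have key : x <= r /\ (x = r -> (count (fun m => p < m)%N ns <= 1)%N).
  case: (lmax_spec (A_alpha alpha (join_cliques s ns))) => [x0|rx].
    rewrite -/x in x0; rewrite x0; split; [lra | move=> h; lra].
  rewrite -/x in rx.
  have [hxA|hxA] := lerP x A.
    by split; [lra | move=> h; lra].
  move: rx; rewrite -eigenvalue_root_char => /eigenvalueP [v Hv vnz].
  have Hthn : forall b : 'I_(size ns), th s alpha (nth 0%N ns b) < x.
    move=> b; apply: le_lt_trans hxA; apply: thle.
    have := elem_le allp (mem_nth 0%N (ltn_ord b)); have e : (size ns).-1 = t' by rewrite szt. rewrite e /N' => h; rewrite leq_subRL 1?addnC //; apply: leq_trans h; apply: leq_addl.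
  have nposn : all (fun m => 0 < m)%N ns.
    by apply: sub_all allp => m /= h; apply: leq_trans h.
  case: (eig_g ha1 nposn Hv vnz Hthn) => [gx|xe]; last first.
    have : (1 : R) <= s%:R by rewrite ler1n.
    move: th0r; rewrite /th0 xe natrD => h1 h2.
    have : 0 < (1 - alpha) * s%:R by apply: mulr_gt0; lra.
    by split; [lra | move=> h; lra].
  set y := x + 1 - alpha * s%:R.
  have nsnz : ns != [::] by apply/eqP => e; move: szt; rewrite e.
  have hy : (sumn ns - p * (size ns).-1)%:R < y.
    by rewrite szt /= -/N' /y; move: hxA; rewrite /A /th; lra.
  have [C1 C2] := conv_list allp nsnz hy.
  rewrite szt /= -/N' in C1 C2.
  have FFE : forall m, FF y m = m%:R / (x - th s alpha m).
    by move=> m; rewrite /FF /y /th; congr (_ / _); ring.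
  set K := (1 - alpha) ^+ 2 * s%:R.
  have K0 : 0 < K by rewrite /K mulr_gt0 ?ltr0n // exprn_gt0 // subr_gt0.
  have gns : x - th0 s ns alpha - K * \sum_(m <- ns) FF y m = 0.
    by move: gx; rewrite gfun_list -/K; under eq_bigr do rewrite -FFE.
  have g0x : gfun s (N' :: nseq t' p) alpha x =
      x - th0 s ns alpha - K * (FF y N' + t'%:R * FF y p).
    by rewrite gfun_list big_cons big_nseq th0E !FFE -/K; congr (_ - _ * (_ + _)); move: (t') => k; elim: k => [|k IH] /=; rewrite ?mul0r // IH -addn1 natrD mulrDl mul1r addrC.
  have KC := ler_wpM2l (ltW K0) C1.
  have g0le : gfun s (N' :: nseq t' p) alpha x <= 0 by rewrite g0x; lra.
  split.
    rewrite leNgt; apply/negP => rx.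
    by have := gfun_mono Hth0 rx; rewrite gr; lra.
  move=> xr; apply: C2.
  have : gfun s (N' :: nseq t' p) alpha x = 0 by rewrite xr.
  rewrite g0x => h.
  have : K * (\sum_(m <- ns) FF y m - (FF y N' + t'%:R * FF y p)) = 0 by lra.
  move/eqP; rewrite mulf_eq0 (gt_eqF K0) /= subr_eq0 => /eqP //.
split; first by case: key.
split.
  by move/(proj2 key) => c; apply: ns_eq.
by move/Hc => h; rewrite /x h L0.
Qed.
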